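(* A pushout square in $\mathbf{MetCH_{sep}}$ all four of whose morphisms are embeddings is also a pullback square in $\mathbf{MetCH_{sep}}$.
   Context: A metric on a set $X$ is a map $d\colon X\times X\to[0,\infty]$ with $d(x,x)=0$ and $d(x,z)\le d(x,y)+d(y,z)$ (not necessarily symmetric, $\infty$ allowed); separated means $d(x,y)=0=d(y,x)$ implies $x=y$. A separated metric compact Hausdorff space is a compact Hausdorff space with a separated metric $d\colon X\times X\to[0,\infty]$ continuous with respect to the upper topology on $[0,\infty]$ (open sets $]u,\infty]$, plus $\emptyset$ and $[0,\infty]$). $\mathbf{MetCH_{sep}}$: these spaces with continuous non-expansive maps as morphisms. An embedding is an injective morphism $f$ with $d_X(x,y)=d_Y(f(x),f(y))$ for all $x,y$. *)

(* Defs.v *)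
From HB Require Import structures.
From mathcomp Require Import all_boot all_order all_algebra.
From mathcomp Require Import all_classical all_reals topology.
Set Implicit Arguments. Unset Strict Implicit. Unset Printing Implicit Defensive.
Import Order.TTheory GRing.Theory Num.Theory.
Local Open Scope classical_set_scope.
Local Open Scope ring_scope.
Local Open Scope ereal_scope.

(* A separated metric compact Hausdorff space: a compact Hausdorff space with a
   separated (possibly non-symmetric, possibly infinite) metric
   d : X * X -> [0, oo] that is continuous for the upper topology on [0, oo],
   i.e. the preimage of every ]u, oo] is open in X * X. *)
Record is_metCH_sep (R : realType) (T : topologicalType) (d : T -> T -> \bar R)
  : Prop := {
  mch_hausdorff : hausdorff_space T;
  mch_compact : compact [set: T];
  mch_ge0 : forall x y, 0 <= d x y;
  mch_refl : forall x, d x x = 0;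
  mch_triangle : forall x y z, d x z <= d x y + d y z;
  mch_sep : forall x y, d x y = 0 -> d y x = 0 -> x = y;
  mch_cont : forall u : \bar R, 0 <= u ->
     open [set p : T * T | u < d p.1 p.2] }.

Record MetCH_sep (R : realType) := MkMetCH {
  mcarrier :> topologicalType;
  mdist : mcarrier -> mcarrier -> \bar R;
  mprop : is_metCH_sep mdist }.

Section Defs.
Variable R : realType.

Definition morph (X Y : MetCH_sep R) (f : X -> Y) : Prop :=
  continuous f /\ forall x y, mdist (f x) (f y) <= mdist x y.

Definition embedding (X Y : MetCH_sep R) (f : X -> Y) : Prop :=
  morph f /\ injective f /\ forall x y, mdist (f x) (f y) = mdist x y.

Definition comm_square (A B C D : MetCH_sep R)
  (f : A -> B) (g : A -> C) (h : B -> D) (k : C -> D) : Prop :=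
  [/\ morph f, morph g, morph h, morph k & h \o f = k \o g].

Definition is_pushout (A B C D : MetCH_sep R)
  (f : A -> B) (g : A -> C) (h : B -> D) (k : C -> D) : Prop :=
  comm_square f g h k /\
  forall (E : MetCH_sep R) (p : B -> E) (q : C -> E),
    morph p -> morph q -> p \o f = q \o g ->
    exists! u : D -> E, [/\ morph u, u \o h = p & u \o k = q].

Definition is_pullback (A B C D : MetCH_sep R)
  (f : A -> B) (g : A -> C) (h : B -> D) (k : C -> D) : Prop :=
  comm_square f g h k /\
  forall (E : MetCH_sep R) (p : E -> B) (q : E -> C),
    morph p -> morph q -> h \o p = k \o q ->
    exists! u : E -> A, [/\ morph u, f \o u = p & g \o u = q].

End Defs.

(* Main.v *)
Require Import Defs.
Require Import Defs.
From HB Require Import structures.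
From mathcomp Require Import all_boot all_order all_algebra.
From mathcomp Require Import all_classical all_reals topology ereal.
From mathcomp Require Import lra.
Set Implicit Arguments. Unset Strict Implicit. Unset Printing Implicit Defensive.
Import Order.TTheory GRing.Theory Num.Theory.
Local Open Scope classical_set_scope.
Local Open Scope ring_scope.
Require Import Defs.
Section Gen.
Variable R : realType.
Local Open Scope ereal_scope.

Lemma mcont (M : MetCH_sep R) (v : R) :
  open [set z : M * M | v%:E < mdist z.1 z.2].
Proof.
have [v0|v0] := leP 0%R v.
  by apply: (mch_cont (mprop M)); rewrite lee_fin.
suff -> : [set z : M * M | v%:E < mdist z.1 z.2] = setT by exact: openT.
apply/seteqP; split => // z _ /=.
by apply: (lt_le_trans _ (mch_ge0 (mprop M) _ _)); rewrite lte_fin.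
Qed.

Lemma split_lt (a b : \bar R) (v : R) : 0 <= a -> 0 <= b -> v%:E < a + b ->
  exists v1 v2 : R, [/\ v1%:E < a, v2%:E < b & (v <= v1 + v2)%R].
Proof.
case: a => [a| |] //; case: b => [b| |] // a0 b0.
- rewrite -EFinD lte_fin => vab.
  exists (a - (a+b-v)/2)%R, (b - (a+b-v)/2)%R; split; rewrite ?lte_fin; lra.
- move=> _; exists (a - 1)%R, (v - a + 1)%R; split; rewrite ?lte_fin ?ltry //; lra.
- move=> _; exists (v - b + 1)%R, (b - 1)%R; split; rewrite ?lte_fin ?ltry //; lra.
- move=> _; exists v, 0%R; split; rewrite ?ltry //; lra.
Qed.

Lemma lsc_add (Z : topologicalType) (G1 G2 : Z -> \bar R) :
  (forall z, 0 <= G1 z) -> (forall z, 0 <= G2 z) ->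
  (forall v : R, open [set z | v%:E < G1 z]) ->
  (forall v : R, open [set z | v%:E < G2 z]) ->
  forall v : R, open [set z | v%:E < G1 z + G2 z].
Proof.
move=> g1 g2 o1 o2 v; rewrite openE => z /= /(split_lt (g1 z) (g2 z)).
move=> [v1 [v2 [l1 l2 vv]]].
have n1 : nbhs z [set z | v1%:E < G1 z] by apply: open_nbhs_nbhs; split.
have n2 : nbhs z [set z | v2%:E < G2 z] by apply: open_nbhs_nbhs; split.
rewrite /interior; apply: filterS (filterI n1 n2) => w [/= h1 h2].
by apply: le_lt_trans (lteD h1 h2); rewrite -EFinD lee_fin.
Qed.

Lemma ex_between (r : R) (e : \bar R) : r%:E < e ->
  exists v : R, (r < v)%R /\ v%:E < e.
Proof.
case: e => [e| |] //; rewrite ?lte_fin => h.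
  by exists ((r+e)/2)%R; split; rewrite ?lte_fin; lra.
by exists (r+1)%R; split; rewrite ?ltry //; lra.
Qed.

Lemma inf_near (T Y : topologicalType) (F : T -> Y -> \bar R) (y0 : Y) (r : R) :
  compact [set: T] -> (forall v : R, open [set z : T * Y | v%:E < F z.1 z.2]) ->
  (forall a, r%:E < F a y0) ->
  \forall y \near y0, r%:E < ereal_inf (range (fun a => F a y)).
Proof.
move=> cT oF Fr.
have := (iffLR (compact_near_coveringP [set: T])) cT (Y * R)%type
  (filter_prod (nbhs y0) (at_right r)) (fun i a => (i.2)%:E < F a i.1) _.
case.
- move=> a _.
  have [v [rv vF]] := ex_between (Fr a).
  have : nbhs (a, y0) [set z : T * Y | v%:E < F z.1 z.2].
    by apply: open_nbhs_nbhs; split => //; exact: oF.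
  case=> [[U V] [nU nV] UV].
  exists (U, [set i : Y * R | V i.1 /\ (i.2 < v)%R]); first split => //.
    exists (V, [set w | (w < v)%R]); first split => //.
      exact: nbhs_right_lt.
    by move=> [y w] [].
  move=> [a' [y w]] [/= Ua' [Vy wv]].
  apply: lt_trans (UV (a', y) (conj Ua' Vy)); by rewrite lte_fin.
move=> [V W] [nV nW] VW.
have : (at_right r) (W `&` (fun w => r < w)%R) by apply: filterI nW (nbhs_right_gt r).
move=> /filter_ex [w [Ww rw]].
apply: filterS nV => y Vy.
apply: (@lt_le_trans _ _ w%:E); first by rewrite lte_fin.
apply: le_ereal_inf_tmp => _ [a _ <-]; apply/ltW.
exact: (VW (y, w) (conj Vy Ww) a I).
Qed.
End Gen.
Section PO.
Variables (R : realType) (A B C D : MetCH_sep R) (f : A -> B) (g : A -> C)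
  (h : B -> D) (k : C -> D).
Hypotheses (ef : embedding f) (eg : embedding g) (eh : embedding h)
  (ek : embedding k) (hfkg : h \o f = k \o g).
Local Open Scope ereal_scope.
Local Notation dA := (@mdist R A).
Local Notation dB := (@mdist R B).
Local Notation dC := (@mdist R C).

Let finj : injective f := ef.2.1.
Let ginj : injective g := eg.2.1.
Let fd a a' : dB (f a) (f a') = dA a a' := ef.2.2 a a'.
Let gd a a' : dC (g a) (g a') = dA a a' := eg.2.2 a a'.
Let gfd a a' : dC (g a) (g a') = dB (f a) (f a'). Proof. by rewrite gd fd. Qed.
Let B0 (x y : B) : 0 <= dB x y := mch_ge0 (mprop B) x y.
Let C0 (x y : C) : 0 <= dC x y := mch_ge0 (mprop C) x y.
Let Btri (x y z : B) : dB x z <= dB x y + dB y z := mch_triangle (mprop B) x y z.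
Let Ctri (x y z : C) : dC x z <= dC x y + dC y z := mch_triangle (mprop C) x y z.
Let Bref (x : B) : dB x x = 0 := mch_refl (mprop B) x.
Let Cref (x : C) : dC x x = 0 := mch_refl (mprop C) x.

Definition inG (y : C) := exists a, y = g a.
Definition E := (B + {y : C | ~ inG y})%type.
HB.instance Definition _ := gen_eqMixin E.
HB.instance Definition _ := gen_choiceMixin E.
Definition pE (x : B) : E := inl x.
Definition qE (y : C) : E := match pselect (inG y) with
  | left H => inl (f (projT1 (cid H))) | right H => inr (exist _ y H) end.
Definition Eopen (U : set E) := open (pE @^-1` U) /\ open (qE @^-1` U).
Lemma EopenT : Eopen setT. Proof. by split; rewrite preimage_setT; exact: openT. Qed.
Lemma EopenI : setI_closed Eopen.
Proof. by move=> U V [? ?] [? ?]; split; rewrite preimage_setI; exact: openI. Qed.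
Lemma EopenU (I : Type) (F : I -> set E) : (forall i, Eopen (F i)) -> Eopen (\bigcup_i F i).
Proof. by move=> H; split; rewrite preimage_bigcup; apply: bigcup_open => i _; case: (H i). Qed.
HB.instance Definition _ := isOpenTopological.Build E EopenT EopenI EopenU.

Lemma qE_g a : qE (g a) = pE (f a).
Proof.
rewrite /qE; case: pselect => [H|H]; last by exfalso; apply: H; exists a.
by case: (cid H) => a' /= /ginj ->.
Qed.

Lemma qE_n y (ny : ~ inG y) : qE y = inr (exist _ y ny).
Proof.
rewrite /qE; case: pselect => [H|H]; first by exfalso.
by congr inr; congr exist; exact: Prop_irrelevance.
Qed.

Lemma E_cases (s : E) : (exists x, s = pE x) \/ (exists y, s = qE y).
Proof.
case: s => [x|[y ny]]; first by left; exists x.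
by right; exists y; rewrite (qE_n ny).
Qed.

Lemma pE_cont : continuous pE.
Proof. by apply/continuousP => U []. Qed.
Lemma qE_cont : continuous qE.
Proof. by apply/continuousP => U []. Qed.

Definition Fx (a : A) (x : B) (y : C) := dB x (f a) + dC (g a) y.
Definition X x y := ereal_inf (range (fun a => Fx a x y)).
Definition Fx' (a : A) (y : C) (x : B) := dC y (g a) + dB (f a) x.
Definition X' y x := ereal_inf (range (fun a => Fx' a y x)).

Definition dE (s t : E) : \bar R := match s, t with
 | inl x, inl x' => dB x x'
 | inr y, inr y' => dC (proj1_sig y) (proj1_sig y')
 | inl x, inr y => X x (proj1_sig y)
 | inr y, inl x => X' (proj1_sig y) x end.

Lemma Fx_ge0 a x y : 0 <= Fx a x y. Proof. exact: adde_ge0. Qed.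
Lemma Fx'_ge0 a y x : 0 <= Fx' a y x. Proof. exact: adde_ge0. Qed.
Lemma X_ge0 x y : 0 <= X x y.
Proof. by apply: le_ereal_inf_tmp => _ [a _ <-]; exact: Fx_ge0. Qed.
Lemma X'_ge0 y x : 0 <= X' y x.
Proof. by apply: le_ereal_inf_tmp => _ [a _ <-]; exact: Fx'_ge0. Qed.
Lemma X_le a x y : X x y <= Fx a x y.
Proof. by apply: ereal_inf_lbound; exists a. Qed.
Lemma X'_le a y x : X' y x <= Fx' a y x.
Proof. by apply: ereal_inf_lbound; exists a. Qed.

Lemma X_g x a : X x (g a) = dB x (f a).
Proof.
apply/le_anti/andP; split.
  by apply: le_trans (X_le a x (g a)) _; rewrite /Fx Cref adde0.
apply: le_ereal_inf_tmp => _ [a' _ <-]; rewrite /Fx gfd; exact: Btri.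
Qed.

Lemma X_f y a : X (f a) y = dC (g a) y.
Proof.
apply/le_anti/andP; split.
  by apply: le_trans (X_le a (f a) y) _; rewrite /Fx Bref add0e.
apply: le_ereal_inf_tmp => _ [a' _ <-]; rewrite /Fx -gfd; exact: Ctri.
Qed.

Lemma X'_g x a : X' (g a) x = dB (f a) x.
Proof.
apply/le_anti/andP; split.
  by apply: le_trans (X'_le a (g a) x) _; rewrite /Fx' Cref add0e.
apply: le_ereal_inf_tmp => _ [a' _ <-]; rewrite /Fx' gfd; exact: Btri.
Qed.

Lemma X'_f y a : X' y (f a) = dC y (g a).
Proof.
apply/le_anti/andP; split.
  by apply: le_trans (X'_le a y (f a)) _; rewrite /Fx' Bref adde0.
apply: le_ereal_inf_tmp => _ [a' _ <-]; rewrite /Fx' -gfd; exact: Ctri.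
Qed.

Lemma dE_pq x y : dE (pE x) (qE y) = X x y.
Proof.
have [[a ->]|ny] := pselect (inG y); first by rewrite qE_g /= X_g.
by rewrite (qE_n ny).
Qed.
Lemma dE_qp y x : dE (qE y) (pE x) = X' y x.
Proof.
have [[a ->]|ny] := pselect (inG y); first by rewrite qE_g /= X'_g.
by rewrite (qE_n ny).
Qed.
Lemma dE_qq y y' : dE (qE y) (qE y') = dC y y'.
Proof.
have [[a ->]|ny] := pselect (inG y); have [[a' ->]|ny'] := pselect (inG y').
- by rewrite !qE_g /= gfd.
- by rewrite qE_g (qE_n ny') /= X_f.
- by rewrite qE_g (qE_n ny) /= X'_f.
- by rewrite (qE_n ny) (qE_n ny').
Qed.
Lemma dE_pp x x' : dE (pE x) (pE x') = dB x x'. Proof. by []. Qed.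

Lemma le_add_inf (T : Type) (m c : \bar R) (F : T -> \bar R) : 0 <= c ->
  (forall a, 0 <= F a) -> (forall a, m <= c + F a) ->
  m <= c + ereal_inf (range F).
Proof.
move=> c0 F0 H; case: c c0 H => [c| |] // c0 H.
  rewrite addeC -leeBlDr //; apply: le_ereal_inf_tmp => _ [a _ <-].
  by rewrite leeBlDr // addeC.
have H0 : 0 <= ereal_inf (range F).
  by apply: le_ereal_inf_tmp => _ [a _ <-].
by move: H0; case: (ereal_inf _) => // [r|] _; rewrite ?addye ?leey.
Qed.

Lemma le_inf_add (T : Type) (m c : \bar R) (F : T -> \bar R) : 0 <= c ->
  (forall a, 0 <= F a) -> (forall a, m <= F a + c) ->
  m <= ereal_inf (range F) + c.
Proof.
move=> c0 F0 H; rewrite addeC; apply: le_add_inf => // a; by rewrite addeC.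
Qed.

Lemma dE_ge0 s t : 0 <= dE s t.
Proof.
case: (E_cases s) => -[x ->]; case: (E_cases t) => -[y ->];
  by rewrite ?dE_pp ?dE_pq ?dE_qp ?dE_qq ?X_ge0 ?X'_ge0.
Qed.

Lemma dE_refl s : dE s s = 0.
Proof. by case: (E_cases s) => -[x ->]; rewrite ?dE_pp ?dE_qq. Qed.

Lemma T3 x x' y : X x y <= dB x x' + X x' y.
Proof.
apply: le_add_inf => // [a|a]; first exact: Fx_ge0.
apply: le_trans (X_le a x y) _; rewrite /Fx addeA; exact: leeD.
Qed.
Lemma T5 x y y' : X x y' <= X x y + dC y y'.
Proof.
apply: le_inf_add => // [a|a]; first exact: Fx_ge0.
apply: le_trans (X_le a x y') _; rewrite /Fx -addeA; exact: leeD.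
Qed.
Lemma T6 y x x' : X' y x' <= X' y x + dB x x'.
Proof.
apply: le_inf_add => // [a|a]; first exact: Fx'_ge0.
apply: le_trans (X'_le a y x') _; rewrite /Fx' -addeA; exact: leeD.
Qed.
Lemma T8 y y' x : X' y x <= dC y y' + X' y' x.
Proof.
apply: le_add_inf => // [a|a]; first exact: Fx'_ge0.
apply: le_trans (X'_le a y x) _; rewrite /Fx' addeA; exact: leeD.
Qed.
Lemma T4 x y x'' : dB x x'' <= X x y + X' y x''.
Proof.
apply: le_inf_add => [|a|a]; [exact: X'_ge0|exact: Fx_ge0|].
apply: le_add_inf => [|a'|a']; [exact: Fx_ge0|exact: Fx'_ge0|].
rewrite /Fx /Fx'.
apply: le_trans (Btri x (f a) x'') _.
apply: le_trans (leeD (lexx _) (Btri (f a) (f a') x'')) _.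
rewrite -gfd.
apply: le_trans (leeD (lexx _) (leeD (Ctri (g a) y (g a')) (lexx _))) _.
by rewrite !addeA.
Qed.
Lemma T7 y x y' : dC y y' <= X' y x + X x y'.
Proof.
apply: le_inf_add => [|a|a]; [exact: X_ge0|exact: Fx'_ge0|].
apply: le_add_inf => [|a'|a']; [exact: Fx'_ge0|exact: Fx_ge0|].
rewrite /Fx /Fx'.
apply: le_trans (Ctri y (g a) y') _.
apply: le_trans (leeD (lexx _) (Ctri (g a) (g a') y')) _.
rewrite gfd.
apply: le_trans (leeD (lexx _) (leeD (Btri (f a) x (f a')) (lexx _))) _.
by rewrite !addeA.
Qed.

Lemma dE_tri s t r : dE s r <= dE s t + dE t r.
Proof.
case: (E_cases s) => -[x ->]; case: (E_cases t) => -[y ->];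
  case: (E_cases r) => -[z ->];
  rewrite ?dE_pp ?dE_pq ?dE_qp ?dE_qq.
- exact: Btri.
- exact: T3.
- exact: T4.
- exact: T5.
- exact: T6.
- exact: T7.
- exact: T8.
- exact: Ctri.
Qed.

Lemma cont_pair (T U V : topologicalType) (p1 : T -> U) (p2 : T -> V) :
  continuous p1 -> continuous p2 -> continuous (fun z => (p1 z, p2 z)).
Proof. by move=> c1 c2 z; apply: cvg_pair; [exact: c1|exact: c2]. Qed.

Lemma cont_fst (T U : topologicalType) : continuous (@fst T U).
Proof. by move=> z; exact: cvg_fst. Qed.
Lemma cont_snd (T U : topologicalType) : continuous (@snd T U).
Proof. by move=> z; exact: cvg_snd. Qed.

Lemma cont_comp (T U V : topologicalType) (p1 : T -> U) (p2 : U -> V) :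
  continuous p1 -> continuous p2 -> continuous (p2 \o p1).
Proof. by move=> c1 c2 z; apply: continuous_comp; [exact: c1|exact: c2]. Qed.

Lemma fcont : continuous f. Proof. exact: ef.1.1. Qed.
Lemma gcont : continuous g. Proof. exact: eg.1.1. Qed.

Lemma Fx_lsc (v : R) :
  open [set z : A * (B * C) | v%:E < Fx z.1 z.2.1 z.2.2].
Proof.
apply: (@lsc_add _ _ (fun z : A * (B * C) => dB z.2.1 (f z.1))
                     (fun z => dC (g z.1) z.2.2)) => // {}v.
- have c : continuous (fun z : A * (B * C) => (z.2.1, f z.1)).
    apply: cont_pair; first exact: (cont_comp (@cont_snd _ _) (@cont_fst _ _)).
    exact: (cont_comp (@cont_fst _ _) fcont).
  exact: ((continuousP _).1 c _ (@mcont _ B v)).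
- have c : continuous (fun z : A * (B * C) => (g z.1, z.2.2)).
    apply: cont_pair; first exact: (cont_comp (@cont_fst _ _) gcont).
    exact: (cont_comp (@cont_snd _ _) (@cont_snd _ _)).
  exact: ((continuousP _).1 c _ (@mcont _ C v)).
Qed.

Lemma Fx'_lsc (v : R) :
  open [set z : A * (C * B) | v%:E < Fx' z.1 z.2.1 z.2.2].
Proof.
apply: (@lsc_add _ _ (fun z : A * (C * B) => dC z.2.1 (g z.1))
                     (fun z => dB (f z.1) z.2.2)) => // {}v.
- have c : continuous (fun z : A * (C * B) => (z.2.1, g z.1)).
    apply: cont_pair; first exact: (cont_comp (@cont_snd _ _) (@cont_fst _ _)).
    exact: (cont_comp (@cont_fst _ _) gcont).
  exact: ((continuousP _).1 c _ (@mcont _ C v)).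
- have c : continuous (fun z : A * (C * B) => (f z.1, z.2.2)).
    apply: cont_pair; first exact: (cont_comp (@cont_fst _ _) fcont).
    exact: (cont_comp (@cont_snd _ _) (@cont_snd _ _)).
  exact: ((continuousP _).1 c _ (@mcont _ B v)).
Qed.

Let cA : compact [set: A] := mch_compact (mprop A).

Lemma X_lsc (v : R) : open [set z : B * C | v%:E < X z.1 z.2].
Proof.
rewrite openE => z /= vz.
apply: (@inf_near _ _ _ (fun a (z : B * C) => Fx a z.1 z.2) z v cA).
  exact: Fx_lsc.
by move=> a; apply: lt_le_trans vz (X_le a _ _).
Qed.

Lemma X'_lsc (v : R) : open [set z : C * B | v%:E < X' z.1 z.2].
Proof.
rewrite openE => z /= vz.
apply: (@inf_near _ _ _ (fun a (z : C * B) => Fx' a z.1 z.2) z v cA).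
  exact: Fx'_lsc.
by move=> a; apply: lt_le_trans vz (X'_le a _ _).
Qed.

Lemma X_att x y : X x y = 0 -> exists a, dB x (f a) = 0 /\ dC (g a) y = 0.
Proof.
move=> X0; apply: contrapT => Hn.
have H : forall a, (0%R)%:E < Fx a (x, y).1 (x, y).2.
  move=> a; rewrite lt0e Fx_ge0 andbT; apply/negP => /eqP.
  move/eqP; rewrite padde_eq0 // => /andP[/eqP h1 /eqP h2].
  by apply: Hn; exists a.
have := @inf_near _ _ _ (fun a (z : B * C) => Fx a z.1 z.2) (x, y) 0%R cA
  Fx_lsc H.
by move=> /nbhs_singleton /=; rewrite -/(X x y) X0 ltxx.
Qed.

Lemma X'_att y x : X' y x = 0 -> exists a, dC y (g a) = 0 /\ dB (f a) x = 0.
Proof.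
move=> X0; apply: contrapT => Hn.
have H : forall a, (0%R)%:E < Fx' a (y, x).1 (y, x).2.
  move=> a; rewrite lt0e Fx'_ge0 andbT; apply/negP => /eqP.
  move/eqP; rewrite padde_eq0 // => /andP[/eqP h1 /eqP h2].
  by apply: Hn; exists a.
have := @inf_near _ _ _ (fun a (z : C * B) => Fx' a z.1 z.2) (y, x) 0%R cA
  Fx'_lsc H.
by move=> /nbhs_singleton /=; rewrite -/(X' y x) X0 ltxx.
Qed.

Lemma le0_eq (e : \bar R) : e <= 0 -> 0 <= e -> e = 0.
Proof. by move=> h1 h2; apply/le_anti/andP. Qed.

Lemma X_sep x y : X x y = 0 -> X' y x = 0 -> inG y.
Proof.
move=> /X_att [a [h1 h2]] /X'_att [a' [h3 h4]].
have e1 : dC (g a) (g a') = 0.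
  by apply: le0_eq => //; apply: le_trans (Ctri _ y _) _; rewrite h2 h3 adde0.
have e2 : dC (g a') (g a) = 0.
  by apply: le0_eq => //; rewrite gfd; apply: le_trans (Btri _ x _) _;
    rewrite h4 h1 adde0.
have := mch_sep (mprop C) e1 e2 => eg'.
exists a; apply: (mch_sep (mprop C)) => //; by rewrite eg'.
Qed.

Lemma dE_sep s t : dE s t = 0 -> dE t s = 0 -> s = t.
Proof.
case: s => [x|[y ny]]; case: t => [x'|[y' ny']] /=.
- by move=> h1 h2; rewrite (mch_sep (mprop B) h1 h2).
- by move=> h1 h2; exfalso; apply: ny'; exact: X_sep h1 h2.
- by move=> h1 h2; exfalso; apply: ny; exact: X_sep h2 h1.
- move=> h1 h2; have e := mch_sep (mprop C) h1 h2; subst y'.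
  by congr inr; congr exist; exact: Prop_irrelevance.
Qed.

Lemma hausdorffX (T U : topologicalType) :
  hausdorff_space T -> hausdorff_space U -> hausdorff_space (T * U)%type.
Proof.
rewrite !open_hausdorff => hT hU [a b] [a' b'] n.
have [e1|n1] := eqVneq a a'.
  have n2 : b != b' by apply: contraNneq n => ->; rewrite e1.
  have [[V1 V2] /= [i1 i2] [o1 o2 e]] := hU _ _ n2.
  exists (snd @^-1` V1, snd @^-1` V2).
    by rewrite /= !in_setE; rewrite !in_setE in i1 i2.
  split; [exact: ((continuousP _).1 (@cont_snd _ _) _ o1)
         |exact: ((continuousP _).1 (@cont_snd _ _) _ o2)|].
  apply/eqP/seteqP; split => // z [/= z1 z2].
  by move/eqP/seteqP: e => [e _]; exact: e _ (conj z1 z2).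
have [[V1 V2] /= [i1 i2] [o1 o2 e]] := hT _ _ n1.
exists (fst @^-1` V1, fst @^-1` V2).
  by rewrite /= !in_setE; rewrite !in_setE in i1 i2.
split; [exact: ((continuousP _).1 (@cont_fst _ _) _ o1)
       |exact: ((continuousP _).1 (@cont_fst _ _) _ o2)|].
apply/eqP/seteqP; split => // z [/= z1 z2].
by move/eqP/seteqP: e => [e _]; exact: e _ (conj z1 z2).
Qed.

Definition iota (s : E) : D :=
  match s with inl x => h x | inr y => k (proj1_sig y) end.

Lemma iota_q y : iota (qE y) = k y.
Proof.
have [[a ->]|ny] := pselect (inG y); last by rewrite (qE_n ny).
by rewrite qE_g /=; exact: (congr1 (fun F => F a) hfkg).
Qed.

Lemma iota_cont : continuous iota.
Proof.
apply/continuousP => U oU; split.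
  exact: ((continuousP _).1 eh.1.1 _ oU).
have -> : qE @^-1` (iota @^-1` U) = k @^-1` U.
  by apply/seteqP; split => y /=; rewrite iota_q.
exact: ((continuousP _).1 ek.1.1 _ oU).
Qed.

Lemma sepC y : ~ inG y -> exists W W' : set C,
  [/\ open W, open W', W y, (forall a, W' (g a)) & W `&` W' `<=` set0].
Proof.
move=> ny.
have hC := mch_hausdorff (mprop C).
have cl : closed (range g).
  apply: compact_closed hC _; apply: continuous_compact => //.
  exact: continuous_subspaceT gcont.
have reg := @compact_regular C y setT hC (mch_compact (mprop C)) filterT.
have H : nbhs y (~` range g).
  apply: open_nbhs_nbhs; split; first exact: closed_openC.
  by move=> [a _ e]; apply: ny; exists a.
have [N nN sN] := reg _ _ H.
exists N°, (~` closure N); split.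
- exact: open_interior.
- exact/closed_openC/closed_closure.
- exact: nN.
- by move=> a /sN; apply; exists a.
- by move=> z [/interior_subset /subset_closure ? ?].
Qed.

Lemma sep_cross x y (ny : ~ inG y) : exists2 AB : set E * set E,
  (inl x \in AB.1 /\ inr (exist _ y ny) \in AB.2) &
  [/\ open AB.1, open AB.2 & AB.1 `&` AB.2 == set0].
Proof.
have [W [W' [oW oW' Wy W'g WW']]] := sepC ny.
exists ([set s : E | match s with inl _ => True | inr y' => W' (proj1_sig y') end],
        [set s : E | match s with inl _ => False | inr y' => W (proj1_sig y') end]).
  by split; apply/mem_set.
split.
- split; first exact: openT.
  have -> : qE @^-1` [set s : E | match s with inl _ => True
                                 | inr y' => W' (proj1_sig y') end] = W' => //.
  apply/seteqP; split => z /=; have [[a ->]|nz] := pselect (inG z);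
    rewrite ?qE_g ?(qE_n nz) //=.
- split; first exact: open0.
  have -> : qE @^-1` [set s : E | match s with inl _ => False
                                 | inr y' => W (proj1_sig y') end] = W => //.
  apply/seteqP; split => z /=; have [[a ->]|nz] := pselect (inG z);
    rewrite ?qE_g ?(qE_n nz) //=.
  by move=> Wg; apply: (WW' (g a)); split.
- apply/eqP/seteqP; split => // -[x0|y0] [] //= H1 H2.
  by apply: (WW' (proj1_sig y0)); split.
Qed.

Lemma E_hausdorff : hausdorff_space E.
Proof.
rewrite open_hausdorff => s t nst.
have [ie|ine] := pselect (iota s = iota t); last first.
  have := mch_hausdorff (mprop D); rewrite open_hausdorff.
  move=> /(_ (iota s) (iota t)); case; first by apply/eqP.
  move=> [U V] /= [Us Vt] [oU oV UV].
  exists (iota @^-1` U, iota @^-1` V).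
    by rewrite /= !in_setE; rewrite !in_setE in Us Vt.
  split; [exact: ((continuousP _).1 iota_cont _ oU)
         |exact: ((continuousP _).1 iota_cont _ oV)|].
  apply/eqP/seteqP; split => // z [/= z1 z2].
  by move/eqP/seteqP: UV => [e _]; exact: e _ (conj z1 z2).
move: nst ie; case: s => [x|[y ny]]; case: t => [x'|[y' ny']] /= nst ie.
- by exfalso; move: nst; rewrite (eh.2.1 _ _ ie) eqxx.
- exact: sep_cross.
- have [[U V] [i1 i2] [o1 o2 e]] := sep_cross x' ny.
  exists (V, U); first by split.
  by split => //; rewrite setIC.
- exfalso; move: nst; have e := ek.2.1 _ _ ie; subst y'.
  have -> : ny = ny' by exact: Prop_irrelevance.
  by rewrite eqxx.
Qed.

Lemma E_compact : compact [set: E].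
Proof.
have -> : [set: E] = pE @` setT `|` qE @` setT.
  apply/seteqP; split => // s _; case: (E_cases s) => -[z ->]; [left|right];
    by exists z.
apply: compactU; apply: continuous_compact.
- exact: continuous_subspaceT pE_cont.
- exact: mch_compact (mprop B).
- exact: continuous_subspaceT qE_cont.
- exact: mch_compact (mprop C).
Qed.

Lemma dE_cont (u : \bar R) : 0 <= u -> open [set z : E * E | u < dE z.1 z.2].
Proof.
case: u => [r| |] // _; last first.
  have -> : [set z : E * E | +oo < dE z.1 z.2] = set0.
    by apply/seteqP; split => // z /=; rewrite ltNge leey.
  exact: open0.
rewrite -closedC.
set S1 := ~` [set z : B * B | r%:E < dB z.1 z.2].
set S2 := ~` [set z : B * C | r%:E < X z.1 z.2].
set S3 := ~` [set z : C * B | r%:E < X' z.1 z.2].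
set S4 := ~` [set z : C * C | r%:E < dC z.1 z.2].
have cpt (T U : MetCH_sep R) (S : set (T * U)%type) : open S -> compact (~` S).
  move=> oS; apply: (@subclosed_compact _ _ (setT `*` setT)) => //.
    exact: open_closedC.
  exact: compact_setX (mch_compact (mprop T)) (mch_compact (mprop U)).
have -> : ~` [set z : E * E | r%:E < dE z.1 z.2] =
  ((fun z => (pE z.1, pE z.2)) @` S1 `|` (fun z => (pE z.1, qE z.2)) @` S2) `|`
  ((fun z => (qE z.1, pE z.2)) @` S3 `|` (fun z => (qE z.1, qE z.2)) @` S4).
  apply/seteqP; split.
    move=> [s t] /= H; case: (E_cases s) => -[x ?]; subst s;
      case: (E_cases t) => -[y ?]; subst t;
      move: H; rewrite ?dE_pp ?dE_pq ?dE_qp ?dE_qq => H.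
    - by left; left; exists (x, y).
    - by left; right; exists (x, y).
    - by right; left; exists (x, y).
    - by right; right; exists (x, y).
  have L2 x y : S2 (x, y) -> ~ (r%:E < dE (pE x) (qE y)) by rewrite dE_pq.
  have L3 x y : S3 (x, y) -> ~ (r%:E < dE (qE x) (pE y)) by rewrite dE_qp.
  have L4 x y : S4 (x, y) -> ~ (r%:E < dE (qE x) (qE y)) by rewrite dE_qq.
  move=> _ [[[[x y] H <-]|[[x y] H <-]]|[[[x y] H <-]|[[x y] H <-]]].
  - exact: H.
  - exact: L2 H.
  - exact: L3 H.
  - exact: L4 H.
apply: compact_closed; first exact: hausdorffX E_hausdorff E_hausdorff.
have c1 (T U : topologicalType) (p1 : T -> E) (p2 : U -> E) :
  continuous p1 -> continuous p2 -> continuous (fun z : T * U => (p1 z.1, p2 z.2)).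
  move=> h1 h2; apply: cont_pair.
    exact: (cont_comp (@cont_fst _ _) h1).
  exact: (cont_comp (@cont_snd _ _) h2).
apply: compactU; apply: compactU; apply: continuous_compact;
  try (apply: continuous_subspaceT; apply: c1; [exact: pE_cont|exact: pE_cont]);
  try (apply: continuous_subspaceT; apply: c1; [exact: pE_cont|exact: qE_cont]);
  try (apply: continuous_subspaceT; apply: c1; [exact: qE_cont|exact: pE_cont]);
  try (apply: continuous_subspaceT; apply: c1; [exact: qE_cont|exact: qE_cont]).
- rewrite /S1; apply: (cpt B B); exact: (@mcont _ B r).
- rewrite /S2; apply: (cpt B C); exact: X_lsc.
- rewrite /S3; apply: (cpt C B); exact: X'_lsc.
- rewrite /S4; apply: (cpt C C); exact: (@mcont _ C r).
Qed.

Lemma EMprop : is_metCH_sep dE.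
Proof.
split; [exact: E_hausdorff|exact: E_compact|exact: dE_ge0|exact: dE_refl
       |exact: dE_tri|exact: dE_sep|exact: dE_cont].
Qed.

Definition EM : MetCH_sep R := @MkMetCH R E dE EMprop.

Hypothesis PO : is_pushout f g h k.

Lemma key b c : h b = k c -> exists a, f a = b /\ g a = c.
Proof.
move=> e.
have mp : @morph R B EM pE.
  by split; [exact: pE_cont|move=> x x'; exact: lexx].
have mq : @morph R C EM qE.
  split; first exact: qE_cont.
  by move=> y y'; change (dE (qE y) (qE y') <= dC y y'); rewrite dE_qq.
have pq : pE \o f = qE \o g by apply: funext => a /=; rewrite qE_g.
have [u [[mu uh uk] _]] := PO.2 EM pE qE mp mq pq.
have : pE b = qE c by rewrite -uh -uk /= e.
have [[a ->]|nc] := pselect (inG c).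
  by rewrite qE_g => -[->]; exists a.
by rewrite (qE_n nc).
Qed.
End PO.

Theorem lemma4p4 (R : realType) (A B C D : MetCH_sep R)
  (f : A -> B) (g : A -> C) (h : B -> D) (k : C -> D) :
  embedding f -> embedding g -> embedding h -> embedding k ->
  is_pushout f g h k -> is_pullback f g h k.
Proof.
move=> ef eg eh ek PO; split; first exact: PO.1.
have [_ _ _ _ hfkg] := PO.1.
move=> E' p q mp mq hpq.
have ex e : exists a, f a = p e /\ g a = q e.
  apply: (key ef eg eh ek hfkg PO); exact: (congr1 (fun F => F e) hpq).
pose u e := projT1 (cid (ex e)).
have uP e : f (u e) = p e /\ g (u e) = q e by rewrite /u; case: cid.
exists u; split.
- split.
  + split.
    * apply/continuousP => O oO.
      rewrite -closedC.
      have -> : ~` (u @^-1` O) = p @^-1` (f @` (~` O)).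
        apply/seteqP; split => e /=.
          by move=> nO; exists (u e) => //; rewrite (uP e).1.
        move=> [a na] fa.
        by rewrite -(ef.2.1 _ _ (etrans fa (esym (uP e).1))).
      apply: preimage_closed; first by move=> e _; exact: mp.1.
      apply: compact_closed; first exact: mch_hausdorff (mprop B).
      apply: continuous_compact; first exact: continuous_subspaceT ef.1.1.
      apply: subclosed_compact (mch_compact (mprop A)) _ => //.
      exact: open_closedC.
    * move=> e e'; rewrite -(ef.2.2) (uP e).1 (uP e').1; exact: mp.2.
  + by apply: funext => e /=; rewrite (uP e).1.
  + by apply: funext => e /=; rewrite (uP e).2.
- move=> u' [_ fu' _]; apply: funext => e; apply: ef.2.1.
  by rewrite (uP e).1 -fu'.
Qed.
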